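(* Under the hypotheses of the previous lemma (standing assumptions, SLC and BUC, each $B_k$ nonnegative doubly stochastic scrambling with nonzero entries at least a fixed $\kappa>0$), and assuming the step sizes satisfy $\alpha_k>0$, $\alpha_{k+1}\le\alpha_k$ for all $k$, $\sum_k\alpha_k=\infty$ and $\sum_k\alpha_k^2<\infty$, the server iterates reach consensus asymptotically: $$\lim_{k\to\infty}\max_{I,G}\|x^I_{0,k}-x^G_{0,k}\|=0.$$
   Context: Standing setup. Integers $S\ge1$ (servers), $C\ge1$ (clients), $D\ge1$, $\Delta\ge1$. $\mathcal{X}\subseteq\mathbb{R}^D$ is a nonempty convex compact set and $\mathcal{P}_{\mathcal{X}}$ is Euclidean projection onto $\mathcal{X}$. For $h=1,\dots,C$, $f_h:\mathbb{R}^D\to\mathbb{R}$ is continuously differentiable and convex with gradient $g_h$; there are constants $L_h$ with $\|g_h(x)\|\le L_h$ for all $x\in\mathcal{X}$ and constants $N_h>0$ with $\|g_h(x)-g_h(y)\|\le N_h\|x-y\|$ for all $x,y\in\mathcal{X}$. Set $\mathbf{L}=\sum_h L_h$, $\mathbf{N}=\sum_h N_h$. Norms are Euclidean. Weight matrices $W_{i,k}\in\mathbb{R}^{S\times C}$ ($0\le i\le\Delta-1$, $k\ge0$), entries possibly negative. Symmetric Learning Condition (SLC): there is $M>0$ with $\sum_{i=1}^{\Delta}\sum_{J=1}^S W_{i-1,k}[J,h]=M$ for all $k\ge0$ and all $h$. Bounded Update Condition (BUC): there is $\bar M>0$ with $\sum_{i=1}^{\Delta}\sum_{J=1}^S |W_{i-1,k}[J,h]|\le\bar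 M$ for all $k,h$. Consensus matrices $B_k\in\mathbb{R}^{S\times S}$ have nonnegative entries. Iteration: given $x^J_{0,0}\in\mathcal{X}$ ($J=1,\dots,S$), for each $k\ge0$ and $i=1,\dots,\Delta$, $x^J_{i,k}=\mathcal{P}_{\mathcal{X}}\big[x^J_{i-1,k}-\alpha_k\sum_{h=1}^C W_{i-1,k}[J,h]\,g_h(x^J_{i-1,k})\big]$, and then $x^I_{0,k+1}=\sum_{J=1}^S B_k[I,J]\,x^J_{\Delta,k}$. A square matrix $B$ is scrambling if for every two rows $I,G$ there is a column $J$ with $B[I,J]>0$ and $B[G,J]>0$. *)

(* Defs.v *)
(* Stdlib reals. Vectors of R^D are represented as functions nat -> R,
   only the first D coordinates being meaningful. *)
From Stdlib Require Import Reals Lra.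
Open Scope R_scope.

Definition Vec := nat -> R.

Fixpoint rsum (n : nat) (f : nat -> R) : R :=
  match n with O => 0 | S m => rsum m f + f m end.

Fixpoint rmax (n : nat) (f : nat -> R) : R :=
  match n with O => 0 | S m => Rmax (rmax m f) (f m) end.

Definition vadd (x y : Vec) : Vec := fun d => x d + y d.
Definition vsub (x y : Vec) : Vec := fun d => x d - y d.
Definition vscale (a : R) (x : Vec) : Vec := fun d => a * x d.
Definition vsum (n : nat) (F : nat -> Vec) : Vec := fun d => rsum n (fun j => F j d).

Definition dot (D : nat) (x y : Vec) : R := rsum D (fun d => x d * y d).
Definition norm (D : nat) (x : Vec) : R := sqrt (dot D x x).

Definition inRD (D : nat) (x : Vec) : Prop := forall d, (D <= d)%nat -> x d = 0.

Definition convex_set (D : nat) (X : Vec -> Prop) : Prop :=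
  forall x y t, X x -> X y -> 0 <= t <= 1 ->
    X (vadd (vscale t x) (vscale (1 - t) y)).

Definition bounded_set (D : nat) (X : Vec -> Prop) : Prop :=
  exists M, forall x, X x -> norm D x <= M.

Definition closed_set (D : nat) (X : Vec -> Prop) : Prop :=
  forall (u : nat -> Vec) (y : Vec), (forall n, X (u n)) -> inRD D y ->
    Un_cv (fun n => norm D (vsub (u n) y)) 0 -> X y.

Definition ncc_set (D : nat) (X : Vec -> Prop) : Prop :=
  (forall x, X x -> inRD D x) /\ (exists x, X x) /\
  convex_set D X /\ bounded_set D X /\ closed_set D X.

Definition is_projection (D : nat) (X : Vec -> Prop) (P : Vec -> Vec) : Prop :=
  forall y, inRD D y ->
    X (P y) /\ forall z, X z -> norm D (vsub y (P y)) <= norm D (vsub y z).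

Definition convex_fun (D : nat) (f : Vec -> R) : Prop :=
  forall x y t, inRD D x -> inRD D y -> 0 <= t <= 1 ->
    f (vadd (vscale t x) (vscale (1 - t) y)) <= t * f x + (1 - t) * f y.

Definition is_gradient (D : nat) (f : Vec -> R) (g : Vec -> Vec) : Prop :=
  forall x, inRD D x ->
    inRD D (g x) /\
    forall eps, 0 < eps -> exists delta, 0 < delta /\
      forall h, inRD D h -> norm D h < delta ->
        Rabs (f (vadd x h) - f x - dot D (g x) h) <= eps * norm D h.

Definition continuous_on_RD (D : nat) (g : Vec -> Vec) : Prop :=
  forall x, inRD D x -> forall eps, 0 < eps -> exists delta, 0 < delta /\
    forall y, inRD D y -> norm D (vsub y x) < delta -> norm D (vsub (g y) (g x)) < eps.

(* One local step i (i = 1..Delta) of all servers, uses W_{i-1,k}: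
   st J = x^J_{i-1,k}; result J = x^J_{i,k}. Argument im1 = i-1. *)
Definition local_step (C : nat) (P : Vec -> Vec) (alpha : nat -> R)
  (W : nat -> nat -> nat -> nat -> R) (g : nat -> Vec -> Vec)
  (k im1 : nat) (st : nat -> Vec) : nat -> Vec :=
  fun J => P (vsub (st J)
                   (vscale (alpha k) (vsum C (fun h => vscale (W im1 k J h) (g h (st J)))))).

(* inner_iter k i st0 = (x^J_{i,k})_J given st0 = (x^J_{0,k})_J *)
Fixpoint inner_iter (C : nat) (P : Vec -> Vec) (alpha : nat -> R)
  (W : nat -> nat -> nat -> nat -> R) (g : nat -> Vec -> Vec)
  (k i : nat) (st0 : nat -> Vec) : nat -> Vec :=
  match i with
  | O => st0
  | S m => local_step C P alpha W g k m (inner_iter C P alpha W g k m st0)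
  end.

(* server_iter k = (x^J_{0,k})_J ; W i k J h = W_{i,k}[J,h] ; B k I J = B_k[I,J] *)
Fixpoint server_iter (S C Delta : nat) (P : Vec -> Vec) (alpha : nat -> R)
  (W : nat -> nat -> nat -> nat -> R) (B : nat -> nat -> nat -> R)
  (g : nat -> Vec -> Vec) (x0 : nat -> Vec) (k : nat) : nat -> Vec :=
  match k with
  | O => x0
  | S m => fun I => vsum S (fun J => vscale (B m I J)
             (inner_iter C P alpha W g m Delta (server_iter S C Delta P alpha W B g x0 m) J))
  end.

Definition scrambling (S : nat) (Bk : nat -> nat -> R) : Prop :=
  forall I G, (I < S)%nat -> (G < S)%nat ->
    exists J, (J < S)%nat /\ 0 < Bk I J /\ 0 < Bk G J.

(* Main.v *)
Require Import Defs.
From Stdlib Require Import Reals Lra Lia FunctionalExtensionality.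
Open Scope R_scope.

Lemma rsum_ext n f g : (forall j, (j < n)%nat -> f j = g j) -> rsum n f = rsum n g.
Proof. induction n; simpl; intros H; auto. rewrite IHn by (intros; apply H; lia). rewrite H by lia; auto. Qed.

Lemma rsum_le n f g : (forall j, (j<n)%nat -> f j <= g j) -> rsum n f <= rsum n g.
Proof. induction n; simpl; intros H; [lra|]. assert (f n <= g n) by (apply H; lia).
  assert (rsum n f <= rsum n g) by (apply IHn; intros; apply H; lia). lra. Qed.

Lemma rsum_scal n c f : rsum n (fun j => c * f j) = c * rsum n f.
Proof. induction n; simpl; [ring| rewrite IHn; ring]. Qed.

Lemma rsum_zero n : rsum n (fun _ => 0) = 0.
Proof. induction n; simpl; [ring| rewrite IHn; ring]. Qed.

Lemma rsum_const n c : rsum n (fun _ => c) = INR n * c.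
Proof. induction n; simpl rsum; [simpl; ring| rewrite IHn, S_INR; ring]. Qed.

Lemma rsum_nonneg n f : (forall j, (j<n)%nat -> 0 <= f j) -> 0 <= rsum n f.
Proof. intros H. rewrite <- (rsum_zero n). apply rsum_le; auto. Qed.

Lemma rsum_term n f j : (forall j, (j<n)%nat -> 0<= f j) -> (j<n)%nat -> f j <= rsum n f.
Proof. induction n; intros H Hj; [lia|]. simpl.
  destruct (Nat.eq_dec j n).
  - subst. assert (0 <= rsum n f) by (apply rsum_nonneg; intros; apply H; lia). lra.
  - assert (f j <= rsum n f) by (apply IHn; [intros; apply H; lia| lia]).
    assert (0 <= f n) by (apply H; lia). lra. Qed.

Lemma rsum_abs n f : Rabs (rsum n f) <= rsum n (fun j => Rabs (f j)).
Proof. induction n; simpl. rewrite Rabs_R0; lra.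
  eapply Rle_trans; [apply Rabs_triang|]. lra. Qed.

Lemma coord_le_norm D v d : (d < D)%nat -> Rabs (v d) <= norm D v.
Proof. intros. unfold norm. rewrite <- sqrt_Rsqr_abs. apply sqrt_le_1_alt. unfold Rsqr, dot.
  apply (rsum_term D (fun d => v d * v d)); auto. intros; nra. Qed.

Lemma norm_le_l1 D v : norm D v <= rsum D (fun d => Rabs (v d)).
Proof. unfold norm.
  assert (HA: 0 <= rsum D (fun d => Rabs (v d))) by (apply rsum_nonneg; intros; apply Rabs_pos).
  rewrite <- (sqrt_Rsqr _ HA). apply sqrt_le_1_alt. unfold Rsqr, dot.
  clear HA. induction D; simpl; [lra|].
  assert (0 <= rsum D (fun d => Rabs (v d))) by (apply rsum_nonneg; intros; apply Rabs_pos).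
  assert (Rabs (v D) * Rabs (v D) = v D * v D) by (rewrite <- Rabs_mult; apply Rabs_pos_eq; nra).
  pose proof (Rabs_pos (v D)). nra. Qed.

Fixpoint mx (n:nat) (f:nat->R) : R := match n with O => f O | S m => Rmax (mx m f) (f m) end.
Fixpoint mn (n:nat) (f:nat->R) : R := match n with O => f O | S m => Rmin (mn m f) (f m) end.

Lemma mx_ub n f j : (j<n)%nat -> f j <= mx n f.
Proof. induction n; intros; [lia|]. simpl. destruct (Nat.eq_dec j n).
  subst; apply Rmax_r. eapply Rle_trans; [apply IHn; lia| apply Rmax_l]. Qed.
Lemma mx_lub n f c : (1<=n)%nat -> (forall j, (j<n)%nat -> f j <= c) -> mx n f <= c.
Proof. induction n; intros; [lia|]. simpl. apply Rmax_lub.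
  destruct n. simpl; apply H0; lia. apply IHn; [lia|intros; apply H0; lia]. apply H0; lia. Qed.
Lemma mn_lb n f j : (j<n)%nat -> mn n f <= f j.
Proof. induction n; intros; [lia|]. simpl. destruct (Nat.eq_dec j n).
  subst; apply Rmin_r. eapply Rle_trans; [apply Rmin_l| apply IHn; lia]. Qed.
Lemma mn_glb n f c : (1<=n)%nat -> (forall j, (j<n)%nat -> c <= f j) -> c <= mn n f.
Proof. induction n; intros; [lia|]. simpl. apply Rmin_glb.
  destruct n. simpl; apply H0; lia. apply IHn; [lia|intros; apply H0; lia]. apply H0; lia. Qed.

Lemma spread_le n f c : (1<=n)%nat -> (forall I G, (I<n)%nat -> (G<n)%nat -> f I - f G <= c) ->
  mx n f - mn n f <= c.
Proof. intros Hn H.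
  assert (forall G, (G<n)%nat -> mx n f - c <= f G).
  { intros G HG. assert (mx n f <= c + f G); [|lra]. apply mx_lub; auto.
    intros I HI. specialize (H I G HI HG). lra. }
  assert (mx n f - c <= mn n f) by (apply mn_glb; auto). lra. Qed.

Lemma spread_nonneg n f : (1<=n)%nat -> 0 <= mx n f - mn n f.
Proof. intros. pose proof (mx_ub n f 0 ltac:(lia)). pose proof (mn_lb n f 0 ltac:(lia)). lra. Qed.

Lemma abs_bnd x e : Rabs x <= e -> -e <= x <= e.
Proof. intros H. pose proof (Rle_abs x). pose proof (Rle_abs (-x)). rewrite Rabs_Ropp in *. lra. Qed.

Lemma spread_pert n f g e : (1<=n)%nat -> (forall j, (j<n)%nat -> Rabs (f j - g j) <= e) ->
  mx n f - mn n f <= mx n g - mn n g + 2*e.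
Proof. intros Hn H. apply spread_le; auto. intros I G HI HG.
  pose proof (H I HI). pose proof (H G HG).
  apply abs_bnd in H0. apply abs_bnd in H1.
  pose proof (mx_ub n g I HI). pose proof (mn_lb n g G HG). lra. Qed.

Lemma contract n (bI bG z : nat -> R) lo hi kappa :
  (forall j, (j<n)%nat -> 0<=bI j) -> (forall j, (j<n)%nat -> 0 <= bG j) ->
  rsum n bI = 1 -> rsum n bG = 1 ->
  (exists j, (j<n)%nat /\ kappa <= bI j /\ kappa <= bG j) ->
  (forall j, (j<n)%nat -> lo <= z j <= hi) ->
  rsum n (fun j => bI j * z j) - rsum n (fun j => bG j * z j) <= (1-kappa)*(hi-lo).
Proof. intros HI HG SI SG [j0 [Hj0 [K1 K2]]] Hz.
  set (m := fun j => Rmin (bI j) (bG j)).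
  assert (Hm0 : forall j, (j<n)%nat -> 0 <= m j) by (intros; apply Rmin_glb; auto).
  assert (Hsm : kappa <= rsum n m).
  { eapply Rle_trans; [| apply (rsum_term n m j0 Hm0 Hj0)]. apply Rmin_glb; auto. }
  assert (Hsm1 : rsum n m <= 1). { rewrite <- SI. apply rsum_le. intros; apply Rmin_l. }
  assert (U: rsum n (fun j => bI j * z j) <= rsum n (fun j => m j * z j + hi * bI j - hi * m j)).
  { apply rsum_le. intros j Hj. specialize (Hz j Hj). assert (m j <= bI j) by apply Rmin_l. nra. }
  assert (Lo: rsum n (fun j => m j * z j + lo * bG j - lo * m j) <= rsum n (fun j => bG j * z j)).
  { apply rsum_le. intros j Hj. specialize (Hz j Hj). assert (m j <= bG j) by apply Rmin_r. nra. }
  assert (E1: rsum n (fun j => m j * z j + hi * bI j - hi * m j) = rsum n (fun j => m j * z j) + hi * rsum n bI - hi * rsum n m)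
    by (clear; induction n; simpl; [ring| rewrite IHn; ring]).
  assert (E2: rsum n (fun j => m j * z j + lo * bG j - lo * m j) = rsum n (fun j => m j * z j) + lo * rsum n bG - lo * rsum n m)
    by (clear; induction n; simpl; [ring| rewrite IHn; ring]).
  rewrite E1, SI in U. rewrite E2, SG in Lo.
  specialize (Hz j0 Hj0). nra. Qed.

Lemma combo D X (Hc: convex_set D X) n (w: nat->R) (z: nat->Vec) :
 (forall j, (j<n)%nat -> 0 <= w j) -> (forall j, (j<n)%nat -> X (z j)) -> 0 < rsum n w ->
 exists p, X p /\ forall d, vsum n (fun j => vscale (w j) (z j)) d = rsum n w * p d.
Proof. induction n; intros Hw Hz Hpos; simpl in Hpos; [lra|].
  assert (Ht: 0 <= rsum n w) by (apply rsum_nonneg; intros; apply Hw; lia).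
  assert (Hwn: 0 <= w n) by (apply Hw; lia).
  destruct (Req_dec (rsum n w) 0) as [E|E].
  - exists (z n). split; [apply Hz; lia|]. intros d. unfold vsum, vscale; simpl.
    assert (Hz0: forall j, (j<n)%nat -> w j = 0).
    { intros j Hj. assert (w j <= rsum n w) by (apply rsum_term; auto; intros; apply Hw; lia).
      assert (0 <= w j) by (apply Hw; lia). lra. }
    rewrite (rsum_ext n _ (fun _ => 0)). rewrite rsum_zero, E; ring.
    intros j Hj; rewrite Hz0 by auto; ring.
  - destruct IHn as [p' [Hp' Ep']]; [intros; apply Hw; lia| intros; apply Hz; lia| lra|].
    set (t := rsum n w + w n).
    exists (vadd (vscale (rsum n w / t) p') (vscale (1 - rsum n w / t) (z n))).
    split.
    + apply Hc; [exact Hp' | apply Hz; lia | ]. unfold t; split.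
      apply Rmult_le_pos; auto. left; apply Rinv_0_lt_compat; lra.
      apply Rmult_le_reg_r with t; [unfold t; lra|]. unfold Rdiv. rewrite Rmult_assoc, Rinv_l by (unfold t; lra). unfold t in *; lra.
    + intros d. specialize (Ep' d). unfold vsum, vscale, vadd in *. simpl. rewrite Ep'.
      unfold t. field. lra.
Qed.

Lemma rec_cv (V a : nat -> R) (r c : R) : 0 <= r < 1 -> (forall k, 0 <= V k) ->
  (forall k, V (S k) <= r * V k + c * a k) ->
  (forall t, 0 < t -> exists K, forall k, (K <= k)%nat -> c * a k <= t) -> Un_cv V 0.
Proof. intros Hr HV Hrec Ha eps Heps.
  destruct (Ha ((1-r)*eps/2)) as [K HK]. { apply Rmult_lt_0_compat; [|lra]. apply Rmult_lt_0_compat; lra. }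
  set (A := Rmax (V K - eps/2) 0).
  assert (HA: 0 <= A) by apply Rmax_r.
  assert (Hind: forall n, V (K+n)%nat - eps/2 <= r^n * A).
  { induction n. simpl. rewrite Nat.add_0_r. replace (1*A) with A by ring. apply Rmax_l.
    rewrite Nat.add_succ_r. specialize (Hrec (K+n)%nat). specialize (HK (K+n)%nat ltac:(lia)).
    simpl. assert (r * (V (K+n)%nat - eps/2) <= r * (r^n * A)) by (apply Rmult_le_compat_l; lra).
    nra. }
  destruct (pow_lt_1_zero r ltac:(rewrite Rabs_pos_eq; lra) (eps/2/(A+1))) as [N HN].
  { apply Rmult_lt_0_compat; [lra| apply Rinv_0_lt_compat; lra]. }
  exists (K+N)%nat. intros k Hk. unfold R_dist. rewrite Rminus_0_r, Rabs_pos_eq by auto.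
  specialize (HN (k-K)%nat ltac:(lia)). specialize (Hind (k-K)%nat).
  replace (K + (k-K))%nat with k in Hind by lia.
  set (q := r^(k-K)) in *. assert (0 <= q) by (apply pow_le; lra).
  rewrite Rabs_pos_eq in HN by auto.
  assert (q*(A+1) < eps/2).
  { replace (eps/2) with (eps/2/(A+1)*(A+1)) by (field; lra). apply Rmult_lt_compat_r; lra. }
  nra. Qed.

Lemma rmax_nonneg n f : 0 <= rmax n f.
Proof. induction n; simpl; [lra|]. eapply Rle_trans; [exact IHn| apply Rmax_l]. Qed.

Lemma rmax_lub n f c : 0 <= c -> (forall j, (j<n)%nat -> f j <= c) -> rmax n f <= c.
Proof. induction n; intros Hc H; simpl; auto. apply Rmax_lub. apply IHn; auto. apply H; lia. Qed.
Theorem claim1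
  (S C D Delta : nat) (HS : (1 <= S)%nat) (HC : (1 <= C)%nat)
  (HD : (1 <= D)%nat) (HDelta : (1 <= Delta)%nat)
  (X : Vec -> Prop) (HX : ncc_set D X)
  (P : Vec -> Vec) (HP : is_projection D X P)
  (f : nat -> Vec -> R) (g : nat -> Vec -> Vec) (L N : nat -> R)
  (Hgrad : forall h, (h < C)%nat -> is_gradient D (f h) (g h))
  (Hcont : forall h, (h < C)%nat -> continuous_on_RD D (g h))
  (Hconv : forall h, (h < C)%nat -> convex_fun D (f h))
  (HL : forall h x, (h < C)%nat -> X x -> norm D (g h x) <= L h)
  (HNpos : forall h, (h < C)%nat -> 0 < N h)
  (HN : forall h x y, (h < C)%nat -> X x -> X y ->
          norm D (vsub (g h x) (g h y)) <= N h * norm D (vsub x y))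
  (W : nat -> nat -> nat -> nat -> R)
  (M Mbar : R) (HM : 0 < M) (HMbar : 0 < Mbar)
  (HSLC : forall k h, (h < C)%nat ->
          rsum Delta (fun i => rsum S (fun J => W i k J h)) = M)
  (HBUC : forall k h, (h < C)%nat ->
          rsum Delta (fun i => rsum S (fun J => Rabs (W i k J h))) <= Mbar)
  (B : nat -> nat -> nat -> R) (kappa : R) (Hkappa : 0 < kappa)
  (HBnn : forall k I J, (I < S)%nat -> (J < S)%nat -> 0 <= B k I J)
  (HBrow : forall k I, (I < S)%nat -> rsum S (fun J => B k I J) = 1)
  (HBcol : forall k J, (J < S)%nat -> rsum S (fun I => B k I J) = 1)
  (HBscr : forall k, scrambling S (B k))
  (HBkappa : forall k I J, (I < S)%nat -> (J < S)%nat -> 0 < B k I J -> kappa <= B k I J)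
  (alpha : nat -> R)
  (Hapos : forall k, 0 < alpha k)
  (Hadec : forall k, alpha (Datatypes.S k) <= alpha k)
  (Hadiv : cv_infty (fun n => sum_f_R0 alpha n))
  (Hasq : exists l, Un_cv (fun n => sum_f_R0 (fun k => alpha k ^ 2) n) l)
  (x0 : nat -> Vec) (Hx0 : forall J, (J < S)%nat -> X (x0 J)) :
  Un_cv (fun k =>
     let x := server_iter S C Delta P alpha W B g x0 k in
     rmax S (fun I => rmax S (fun G => norm D (vsub (x I) (x G))))) 0.
Proof.
  destruct HX as [HXin [[xX HxX] [Hcvx _]]].
  set (Lsum := rsum C L).
  assert (HLnn: forall h, (h<C)%nat -> 0 <= L h).
  { intros h Hh. eapply Rle_trans; [| apply (HL h xX Hh HxX)]. apply sqrt_pos. }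
  assert (HLs : 0 <= Lsum) by (apply rsum_nonneg; auto).
  set (c0 := 2 * (INR D * (Mbar * Lsum))).
  assert (Hc0 : 0 <= c0).
  { unfold c0. apply Rmult_le_pos; [lra|]. apply Rmult_le_pos; [apply pos_INR|]. apply Rmult_le_pos; lra. }
  assert (HWb : forall k i J h, (i < Delta)%nat -> (J < S)%nat -> (h < C)%nat -> Rabs (W i k J h) <= Mbar).
  { intros k i J h Hi HJ Hh. eapply Rle_trans; [| apply (HBUC k h Hh)].
    eapply Rle_trans; [| apply (rsum_term Delta (fun i => rsum S (fun J => Rabs (W i k J h))) i); auto].
    - apply (rsum_term S (fun J => Rabs (W i k J h)) J); auto. intros; apply Rabs_pos.
    - intros; apply rsum_nonneg; intros; apply Rabs_pos. }
  assert (Hstep: forall k i J x, (i < Delta)%nat -> (J < S)%nat -> X x ->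
    X (P (vsub x (vscale (alpha k) (vsum C (fun h => vscale (W i k J h) (g h x)))))) /\
    forall d, (d < D)%nat ->
      Rabs (P (vsub x (vscale (alpha k) (vsum C (fun h => vscale (W i k J h) (g h x))))) d - x d)
        <= c0 * alpha k).
  { intros k i J x Hi HJ Hx.
    set (v := vsum C (fun h => vscale (W i k J h) (g h x))).
    set (y := vsub x (vscale (alpha k) v)).
    pose proof (HXin x Hx) as xin.
    assert (gin : forall h, (h<C)%nat -> inRD D (g h x)) by (intros h Hh; exact (proj1 (Hgrad h Hh x xin))).
    assert (yin : inRD D y).
    { intros d Hd. unfold y, v, vsub, vscale, vsum. rewrite (xin d Hd).
      rewrite (rsum_ext C _ (fun _ => 0)). rewrite rsum_zero; ring.
      intros h Hh; rewrite (gin h Hh d Hd); ring. }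
    destruct (HP y yin) as [HPX HPmin]. split; [exact HPX|].
    assert (Hv : forall d, (d<D)%nat -> Rabs (v d) <= Mbar * Lsum).
    { intros d Hd. unfold v, vsum, vscale. eapply Rle_trans; [apply rsum_abs|].
      unfold Lsum; rewrite <- rsum_scal. apply rsum_le; intros h Hh. rewrite Rabs_mult.
      apply Rmult_le_compat; try apply Rabs_pos. apply HWb; auto.
      eapply Rle_trans; [apply coord_le_norm; exact Hd|]. apply HL; auto. }
    assert (Hyx : norm D (vsub y x) <= INR D * (alpha k * (Mbar * Lsum))).
    { eapply Rle_trans; [apply norm_le_l1|]. rewrite <- rsum_const. apply rsum_le.
      intros d Hd. unfold y, vsub, vscale.
      replace (x d - alpha k * v d - x d) with (- (alpha k * v d)) by ring.
      rewrite Rabs_Ropp, Rabs_mult, (Rabs_pos_eq (alpha k)) by (left; auto).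
      apply Rmult_le_compat_l; [left; auto| auto]. }
    intros d Hd. fold v. fold y.
    replace (P y d - x d) with (- (vsub y (P y) d) + vsub y x d) by (unfold vsub; ring).
    eapply Rle_trans; [apply Rabs_triang|]. rewrite Rabs_Ropp.
    pose proof (coord_le_norm D (vsub y (P y)) d Hd).
    pose proof (coord_le_norm D (vsub y x) d Hd).
    pose proof (HPmin x Hx).
    unfold c0. lra. }
  assert (Hinner: forall k st0, (forall J, (J<S)%nat -> X (st0 J)) -> forall i, (i <= Delta)%nat ->
     forall J, (J < S)%nat -> X (inner_iter C P alpha W g k i st0 J) /\
     forall d, (d<D)%nat -> Rabs (inner_iter C P alpha W g k i st0 J d - st0 J d) <= INR i * (c0 * alpha k)).
  { intros k st0 Hst0. induction i; intros Hi J HJ.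
    - simpl. split; auto. intros d Hd. replace (st0 J d - st0 J d) with 0 by ring. rewrite Rabs_R0; lra.
    - destruct (IHi ltac:(lia) J HJ) as [HXi Hbi]. cbn [inner_iter]. unfold local_step.
      destruct (Hstep k i J _ ltac:(lia) HJ HXi) as [HX' Hb']. split; [exact HX'|].
      intros d Hd. specialize (Hb' d Hd). specialize (Hbi d Hd). rewrite S_INR.
      match goal with |- Rabs (?a - ?c) <= _ => replace (a - c) with ((a - inner_iter C P alpha W g k i st0 J d) + (inner_iter C P alpha W g k i st0 J d - c)) by ring end.
      eapply Rle_trans; [apply Rabs_triang|]. lra. }
  set (xk := fun k => server_iter S C Delta P alpha W B g x0 k).
  assert (Hsrv: forall k J, (J<S)%nat -> X (xk k J)).
  { induction k; intros J HJ. simpl; auto.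
    set (z := inner_iter C P alpha W g k Delta (xk k)).
    assert (Hz : forall J, (J<S)%nat -> X (z J)) by (intros; apply (Hinner k (xk k) IHk Delta (le_n _)); auto).
    destruct (combo D X Hcvx S (fun J0 => B k J J0) z) as [p [Hp Ep]]; auto.
    rewrite HBrow; auto; lra.
    replace (xk (Datatypes.S k) J) with p; auto.
    apply functional_extensionality. intros d. rewrite HBrow in Ep by auto.
    change (xk (Datatypes.S k) J d) with (vsum S (fun J0 => vscale (B k J J0) (z J0)) d).
    rewrite Ep; ring. }
  assert (Hk1 : kappa <= 1).
  { destruct (HBscr 0%nat 0%nat 0%nat ltac:(lia) ltac:(lia)) as [J [HJ [HB1 _]]].
    eapply Rle_trans; [apply (HBkappa 0%nat 0%nat J); auto; lia|].
    rewrite <- (HBrow 0%nat 0%nat) by lia. apply (rsum_term S (fun J => B 0%nat 0%nat J)); auto.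
    all: intros; apply HBnn; lia. }
  set (sp := fun k d => mx S (fun J => xk k J d) - mn S (fun J => xk k J d)).
  set (V := fun k => rsum D (sp k)).
  assert (Hsp0 : forall k d, 0 <= sp k d) by (intros; apply spread_nonneg; auto).
  assert (HV0 : forall k, 0 <= V k) by (intros; apply rsum_nonneg; auto).
  set (e := fun k => INR Delta * (c0 * alpha k)).
  assert (Hsp : forall k d, (d<D)%nat -> sp (Datatypes.S k) d <= (1-kappa) * (sp k d + 2 * e k)).
  { intros k d Hd.
    set (z := inner_iter C P alpha W g k Delta (xk k)).
    assert (Hzb : forall J, (J<S)%nat -> Rabs (z J d - xk k J d) <= e k)
      by (intros J HJ; apply (Hinner k (xk k) (Hsrv k) Delta (le_n _) J HJ); auto).
    pose proof (spread_pert S (fun J => z J d) (fun J => xk k J d) (e k) HS Hzb) as Hpt.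
    assert (Hx1 : forall I, xk (Datatypes.S k) I d = rsum S (fun J => B k I J * z J d)) by reflexivity.
    assert (sp (Datatypes.S k) d <= (1-kappa) * (mx S (fun J => z J d) - mn S (fun J => z J d))).
    { unfold sp. apply spread_le; auto. intros I G HI HG. rewrite !Hx1.
      apply contract.
      - intros; apply HBnn; auto.
      - intros; apply HBnn; auto.
      - apply HBrow; auto.
      - apply HBrow; auto.
      - destruct (HBscr k I G HI HG) as [J [HJ [H1 H2]]]. exists J. split; [exact HJ|].
        split; apply HBkappa; auto.
      - intros j Hj. split; [apply (mn_lb S (fun J => z J d)) | apply (mx_ub S (fun J => z J d))]; auto. }
    fold (sp k d) in Hpt. nra. }
  assert (Hrec : forall k, V (Datatypes.S k) <= (1-kappa) * V k + ((1-kappa) * (INR D * (2 * (INR Delta * c0)))) * alpha k).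
  { intros k. unfold V. eapply Rle_trans; [apply rsum_le; intros d Hd; apply Hsp; exact Hd|].
    assert (E: forall n, rsum n (fun d => (1-kappa)*(sp k d + 2*e k)) = (1-kappa)*rsum n (sp k) + (1-kappa)*(INR n*(2*e k))) by (induction n; simpl rsum; [simpl; ring| rewrite IHn, S_INR; ring]).
    rewrite E. unfold e. apply Req_le; ring. }
  assert (HV : Un_cv V 0).
  { apply (rec_cv V alpha (1-kappa) ((1-kappa) * (INR D * (2 * (INR Delta * c0))))); auto; [lra|].
    set (c := (1-kappa) * (INR D * (2 * (INR Delta * c0)))).
    assert (Hc : 0 <= c).
    { unfold c. apply Rmult_le_pos; [lra|]. apply Rmult_le_pos; [apply pos_INR|].
      apply Rmult_le_pos; [lra|]. apply Rmult_le_pos; [apply pos_INR| auto]. }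
    intros t Ht. destruct Hasq as [l Hl].
    assert (Hd : Un_cv (fun n => alpha (Datatypes.S n) ^ 2) 0).
    { intros eps Heps. destruct (Hl (eps/2) ltac:(lra)) as [N0 HN0]. exists N0. intros n Hn.
      pose proof (HN0 n Hn) as A1. pose proof (HN0 (Datatypes.S n) ltac:(lia)) as A2.
      unfold R_dist in A1, A2 |- *. change (sum_f_R0 (fun k => alpha k ^ 2) (Datatypes.S n)) with (sum_f_R0 (fun k => alpha k ^ 2) n + alpha (Datatypes.S n) ^ 2) in A2.
      replace (alpha (Datatypes.S n) ^ 2 - 0) with
        ((sum_f_R0 (fun k => alpha k ^ 2) n + alpha (Datatypes.S n) ^ 2 - l) - (sum_f_R0 (fun k => alpha k ^ 2) n - l)) by ring.
      unfold Rminus at 1. eapply Rle_lt_trans; [apply Rabs_triang|]. rewrite Rabs_Ropp. lra. }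
    set (t' := t / (c + 1)).
    assert (Ht' : 0 < t') by (unfold t'; apply Rmult_lt_0_compat; [lra| apply Rinv_0_lt_compat; lra]).
    destruct (Hd (t' * t') ltac:(nra)) as [K HK]. exists (Datatypes.S K). intros k Hk.
    destruct k; [lia|]. specialize (HK k ltac:(lia)). unfold R_dist in HK.
    rewrite Rminus_0_r, Rabs_pos_eq in HK by (apply pow_le; left; auto).
    assert (alpha (Datatypes.S k) < t') by (pose proof (Hapos (Datatypes.S k)); simpl in HK; nra).
    assert ((c+1) * t' = t) by (unfold t'; field; lra).
    pose proof (Hapos (Datatypes.S k)). nra. }
  intros eps Heps. destruct (HV eps Heps) as [K HK]. exists K. intros n Hn.
  specialize (HK n Hn). unfold R_dist in *. rewrite Rminus_0_r in *.
  rewrite Rabs_pos_eq in HK by auto.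
  assert (Hq : rmax S (fun I => rmax S (fun G => norm D (vsub (xk n I) (xk n G))) ) <= V n).
  { apply rmax_lub; auto. intros I HI. apply rmax_lub; auto. intros G HG.
    eapply Rle_trans; [apply norm_le_l1|]. apply rsum_le. intros d Hd.
    unfold vsub, sp. apply Rabs_le.
    pose proof (mx_ub S (fun J => xk n J d) I HI). pose proof (mn_lb S (fun J => xk n J d) I HI).
    pose proof (mx_ub S (fun J => xk n J d) G HG). pose proof (mn_lb S (fun J => xk n J d) G HG).
    simpl in *. lra. }
  assert (0 <= rmax S (fun I => rmax S (fun G => norm D (vsub (xk n I) (xk n G))))) by apply rmax_nonneg.
  cbv zeta. fold (xk n). rewrite Rabs_pos_eq by auto. lra.
Qed.
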